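(* Let $G_1=(V,D_1)$ and $G_2=(V,D_2)$ be directed graphs with the same Jacobian matroid. If a node $i$ is a sink node (has no children) in both graphs, then $\mathrm{pa}_{G_1}(i)=\mathrm{pa}_{G_2}(i)$.
   Context: A directed graph $G=(V,D)$ has edge set $D\subseteq V\times V$ of ordered pairs $(i,j)$, $i\neq j$. $\Lambda$ is the $V\times V$ matrix with indeterminate entries $\lambda_{ij}$ for $(i,j)\in D$ and zeros elsewhere, and $s$ is a further indeterminate. Let $\psi_G(\Lambda,s)=s(I-\Lambda)(I-\Lambda)^T=K$. The transposed Jacobian $J(\psi_G)$ has rows indexed by $\{\lambda_{kl}:(k,l)\in D\}\cup\{s\}$ and columns indexed by $K_{ij}$, $i\le j$, with entries $\partial K_{ij}/\partial\theta$. The Jacobian matroid of $G$ is the matroid on the column labels in which a set is independent iff its columns are linearly independent over $\mathbb{R}(\lambda,s)$. *)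

(* Defs.v *)
From HB Require Import structures.
From mathcomp Require Import all_boot all_order all_algebra.
From mathcomp Require Import fraction.
From mathcomp Require Import reals.
From mathcomp Require Import mpoly.
Set Implicit Arguments. Unset Strict Implicit. Unset Printing Implicit Defensive.
Import Order.TTheory GRing.Theory Num.Theory.
Local Open Scope ring_scope.

Definition loopless (n : nat) (D : {set 'I_n * 'I_n}) : Prop :=
  forall i : 'I_n, (i, i) \notin D.

(* Polynomial ring variables: nvars n = n*n + 1; variable (i*n + j) is
   lambda_ij, variable n*n is s.  Variables lambda_ij with (i,j) \notin D
   never occur. *)
Definition nvars (n : nat) : nat := (n * n).+1.
Definition lamvar (n : nat) (i j : 'I_n) : 'I_(nvars n) := inord (i * n + j).
Definition svar (n : nat) : 'I_(nvars n) := ord_max.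

Section Jac.
Variables (R : realType) (n : nat).
Local Notation P := {mpoly R[nvars n]}.
Local Notation F := {fraction P}.

Definition Lambda (D : {set 'I_n * 'I_n}) : 'M[P]_n :=
  \matrix_(i, j) (if (i, j) \in D then 'X_(lamvar i j) else 0).

Definition Kmat (D : {set 'I_n * 'I_n}) : 'M[P]_n :=
  'X_(svar n) *: ((1%:M - Lambda D) *m (1%:M - Lambda D)^T).

(* Column of the transposed Jacobian labelled K_ij: entries dK_ij/dtheta,
   theta ranging over the variables (seen in R(lambda, s)).  The rows for
   variables not among {lambda_kl : (k,l) in D} u {s} are identically zero. *)
Definition jac_col (D : {set 'I_n * 'I_n}) (p : 'I_n * 'I_n) : 'rV[F]_(nvars n) :=
  \row_(v < nvars n) tofrac ((Kmat D p.1 p.2)^`M(v)).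

Definition labels : {set 'I_n * 'I_n} := [set p : 'I_n * 'I_n | (nat_of_ord p.1 <= nat_of_ord p.2)%N].

Definition jac_indep (D : {set 'I_n * 'I_n}) (S : {set 'I_n * 'I_n}) : bool :=
  (S \subset labels) &&
  row_free (\matrix_(r < #|S|) jac_col D (enum_val r)).

Definition same_jacobian_matroid (D1 D2 : {set 'I_n * 'I_n}) : Prop :=
  forall S : {set 'I_n * 'I_n}, jac_indep D1 S = jac_indep D2 S.
End Jac.

Definition is_sink (n : nat) (D : {set 'I_n * 'I_n}) (i : 'I_n) : Prop :=
  forall j : 'I_n, (i, j) \notin D.

Definition parents (n : nat) (D : {set 'I_n * 'I_n}) (i : 'I_n) : {set 'I_n} :=
  [set j | (j, i) \in D].

(* Main.v *)
Require Import Defs.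
From HB Require Import structures.
From mathcomp Require Import all_boot all_order all_algebra.
From mathcomp Require Import fraction reals mpoly.
Import Order.TTheory GRing.Theory Num.Theory.
Local Open Scope ring_scope.
Set Implicit Arguments. Unset Strict Implicit.

Section S.
Variables (R : realType) (n : nat).

Lemma Kmat_sink (D : {set 'I_n * 'I_n}) (i j : 'I_n) :
  is_sink D i -> j != i ->
  Kmat R D i j = - ('X_(svar n) * Lambda R D j i) /\
  Kmat R D j i = - ('X_(svar n) * Lambda R D j i).
Proof.
move=> Hs Hji.
set A := (1%:M - Lambda R D).
have sym : forall a b, (A *m A^T) a b = (A *m A^T) b a.
  by move=> a b; rewrite !mxE; apply: eq_bigr => k _; rewrite !mxE mulrC.
have E : (A *m A^T) i j = - Lambda R D j i.
  have -> : (A *m A^T) i j = (1%:M *m A^T) i j.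
    rewrite !mxE; apply: eq_bigr => k _.
    by rewrite !mxE (negbTE (Hs k)) subr0.
  by rewrite mul1mx !mxE (negbTE Hji) sub0r.
have Ki : forall a b, Kmat R D a b = 'X_(svar n) * (A *m A^T) a b.
  by move=> a b; rewrite /Kmat [LHS]mxE.
by split; rewrite Ki; [rewrite E mulrN | rewrite sym E mulrN].
Qed.

Lemma svar_lam (j k : 'I_n) : (lamvar j k == svar n) = false.
Proof.
apply/negbTE; rewrite /lamvar /svar -val_eqE /= inordK.
  rewrite /nvars /=; apply/eqP => E.
  have : (j * n + k < n * n)%N.
    have := ltn_ord k; have := ltn_ord j => hj hk.
    apply: (@leq_trans (j * n + n)); first by rewrite ltn_add2l.
    by rewrite -mulSnr leq_mul2r hj orbT.
  by rewrite E ltnn.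
rewrite /nvars ltnS.
have := ltn_ord k; have := ltn_ord j => hj hk.
apply: (@leq_trans (j * n + n)); first by rewrite leq_add2l ltnW.
by rewrite -mulSnr leq_mul2r hj orbT.
Qed.

Lemma mX_neq0 (l : 'I_(nvars n)) : ('X_l : {mpoly R[nvars n]}) != 0.
Proof.
apply/eqP => H.
have := @mcoeffXU _ R l l. rewrite H. by rewrite mcoeff0 eqxx => /eqP; rewrite eq_sym oner_eq0.
Qed.

Lemma key (D : {set 'I_n * 'I_n}) (i j : 'I_n) :
  is_sink D i -> j != i ->
  jac_indep R D [set (if (i <= j)%N then (i, j) else (j, i))] = ((j, i) \in D).
Proof.
move=> Hs Hji.
set p := (if _ then _ else _).
have [K1 K2] := Kmat_sink Hs Hji.
have Kp : Kmat R D p.1 p.2 = - ('X_(svar n) * Lambda R D j i).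
  by rewrite /p; case: ifP.
have pl : p \in labels n.
  rewrite inE /p; case: ifP => //= /negbT; rewrite -ltnNge; exact: ltnW.
rewrite /jac_indep sub1set pl /=.
set A := \matrix_(r < _) _.
have Arv : forall r v, A r v = jac_col R D p 0 v.
  move=> r v; rewrite /A !mxE.
  have := enum_valP r; rewrite inE => /eqP ->.
  by [].
have pS : p \in [set p] by rewrite inE.
have hrow : #|[set p]| = 1%N by rewrite cards1.
case: (boolP ((j, i) \in D)) => HD.
- rewrite /row_free; apply/eqP; apply/anti_leq.
  rewrite rank_leq_row /=.
  apply: (@leq_trans 1%N); first by rewrite hrow.
  rewrite lt0n mxrank_eq0; apply/eqP => A0.
  have := Arv (enum_rank_in pS p) (svar n).
  rewrite A0 [in X in X = _]mxE /jac_col mxE Kp /Lambda mxE HD mderivN mderivM.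
  rewrite !mderivX !mnm1E eqxx svar_lam scale0r mulr0 addr0 scale1r.
  set m := (X in 'X_[X]).
  have -> : m = 0%MM by apply/mnmP => k; rewrite /m mnmBE mnm0E subnn.
  rewrite mpolyX0 mul1r => /esym /eqP; rewrite tofrac_eq0 oppr_eq0.
  by apply/negP; apply: mX_neq0.
- have -> : A = 0.
    apply/matrixP => r v; rewrite Arv /jac_col mxE Kp /Lambda mxE (negbTE HD) mulr0 oppr0.
    by rewrite mderiv0 tofrac0 mxE.
  by rewrite /row_free mxrank0 hrow.
Qed.
End S.

Theorem lemma3p7 (R : realType) (n : nat) (D1 D2 : {set 'I_n * 'I_n}) (i : 'I_n) :
  loopless D1 -> loopless D2 ->
  same_jacobian_matroid R D1 D2 ->
  is_sink D1 i -> is_sink D2 i ->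
  parents D1 i = parents D2 i.
Proof.
move=> L1 L2 Hm S1 S2; apply/setP => j; rewrite !inE.
case: (eqVneq j i) => [->|Hji].
  by rewrite (negbTE (L1 i)) (negbTE (L2 i)).
by rewrite -(key R S1 Hji) -(key R S2 Hji) Hm.
Qed.
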